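(* For $p\in\mathbb{R}$, the function $h_p(x)=(1-x)^pK(x)$ is log-concave on $(0,1)$ if and only if $p\ge 7/32$, and log-convex on $(0,1)$ if and only if $p\le 0$.
   Context: $K(x)={\cal K}(\sqrt x)=\frac\pi2\,{}_2F_1(1/2,1/2;1;x)$ for $x\in[0,1)$, where ${\cal K}(r)=\int_0^{\pi/2}(1-r^2\sin^2t)^{-1/2}dt$ is the complete elliptic integral of the first kind. *)

(* Defs.v *)
From Stdlib Require Import Reals.
From Coquelicot Require Import Coquelicot.
Open Scope R_scope.

(* Complete elliptic integral of the first kind in the parameter x = r^2:
   K(x) = Kc(sqrt x) = int_0^{pi/2} (1 - x sin^2 t)^{-1/2} dt, x in [0,1). *)
Definition K (x : R) : R :=
  RInt (fun t => / sqrt (1 - x * (sin t) ^ 2)) 0 (PI / 2).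

Definition h (p x : R) : R := Rpower (1 - x) p * K x.

Definition concave_on (f : R -> R) (a b : R) : Prop :=
  forall x y t, a < x < b -> a < y < b -> 0 <= t <= 1 ->
    t * f x + (1 - t) * f y <= f (t * x + (1 - t) * y).

Definition convex_on (f : R -> R) (a b : R) : Prop :=
  forall x y t, a < x < b -> a < y < b -> 0 <= t <= 1 ->
    f (t * x + (1 - t) * y) <= t * f x + (1 - t) * f y.

Definition log_concave_on (f : R -> R) (a b : R) : Prop :=
  (forall x, a < x < b -> 0 < f x) /\ concave_on (fun x => ln (f x)) a b.

Definition log_convex_on (f : R -> R) (a b : R) : Prop :=
  (forall x, a < x < b -> 0 < f x) /\ convex_on (fun x => ln (f x)) a b.

(* Main.v *)
Require Import Defs.
From Stdlib Require Import Reals.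
From Coquelicot Require Import Coquelicot.
Open Scope R_scope.
From Stdlib Require Import Lra Psatz.


Definition ef (x t : R) := sqrt (1 - x * sin t ^ 2).
Definition kf (x t : R) := / sqrt (1 - x * sin t ^ 2).
Definition E (x : R) := RInt (ef x) 0 (PI/2).
Definition kd (u v : R) := sin v ^ 2 / (2 * (1 - u * sin v ^ 2) * sqrt (1 - u * sin v ^ 2)).
Definition ed (u v : R) := - (sin v ^ 2) / (2 * sqrt (1 - u * sin v ^ 2)).

Ltac sides := repeat (match goal with |- _ /\ _ => split | |- True => exact I end); try (apply Rgt_not_eq; apply sqrt_lt_R0); try lra.

Lemma K_eq x : K x = RInt (kf x) 0 (PI/2).
Proof. reflexivity. Qed.

Lemma s_bound t : 0 <= sin t ^ 2 <= 1.
Proof. pose proof (SIN_bound t). nra. Qed.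

Lemma u_pos x t : x < 1 -> 0 < 1 - x * sin t ^ 2.
Proof. intros Hx. pose proof (s_bound t). destruct (Rle_dec x 0); nra. Qed.

Lemma cont_pt_of_ex_derive f x : ex_derive f x -> continuity_pt f x.
Proof. intros H. apply continuity_pt_filterlim. exact (ex_derive_continuous f x H). Qed.

Lemma kf_cont x t : x < 1 -> continuous (kf x) t.
Proof. intros Hx. apply (@ex_derive_continuous R_AbsRing R_NormedModule). unfold kf. auto_derive.
  pose proof (u_pos x t Hx). sides. Qed.

Lemma ef_cont x t : x < 1 -> continuous (ef x) t.
Proof. intros Hx. apply (@ex_derive_continuous R_AbsRing R_NormedModule). unfold ef. auto_derive.
  pose proof (u_pos x t Hx). sides. Qed.

Lemma kf_der y t : y < 1 -> is_derive (fun z => kf z t) y (kd y t).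
Proof. intros Hy. pose proof (u_pos y t Hy) as Hu. unfold kf, kd. auto_derive.
  - sides.
  - replace (1 + - (y * (sin t * (sin t * 1)))) with (1 - y * sin t ^ 2) by ring.
    pose proof (sqrt_lt_R0 _ Hu). pose proof (sqrt_sqrt _ (Rlt_le _ _ Hu)).
    set (w := sqrt _) in *. set (u := 1 - y * sin t ^ 2) in *.
    rewrite H0. field. lra.
Qed.

Lemma ef_der y t : y < 1 -> is_derive (fun z => ef z t) y (ed y t).
Proof. intros Hy. pose proof (u_pos y t Hy) as Hu. unfold ef, ed. auto_derive.
  - sides.
  - replace (1 + - (y * (sin t * (sin t * 1)))) with (1 - y * sin t ^ 2) by ring.
    pose proof (sqrt_lt_R0 _ Hu).
    set (w := sqrt _) in *. set (u := 1 - y * sin t ^ 2) in *.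
    field. lra.
Qed.

Lemma c2_s x t : continuity_2d_pt (fun u v => sin v ^ 2) x t.
Proof.
  apply (continuity_1d_2d_pt_comp (fun z => sin z ^ 2) (fun u v => v)).
  - apply cont_pt_of_ex_derive. auto_derive. exact I.
  - apply continuity_2d_pt_id2.
Qed.

Lemma c2_u x t : continuity_2d_pt (fun u v => 1 - u * sin v ^ 2) x t.
Proof.
  apply continuity_2d_pt_minus. apply continuity_2d_pt_const.
  apply continuity_2d_pt_mult. apply continuity_2d_pt_id1. apply c2_s.
Qed.

Lemma c2_w x t : x < 1 -> continuity_2d_pt (fun u v => sqrt (1 - u * sin v ^ 2)) x t.
Proof.
  intros Hx.
  apply (continuity_1d_2d_pt_comp sqrt (fun u v => 1 - u * sin v ^ 2)).
  - apply sqrt_continuity_pt. apply u_pos; auto.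
  - apply c2_u.
Qed.

Lemma c2_kd x t : x < 1 -> continuity_2d_pt kd x t.
Proof.
  intros Hx. pose proof (u_pos x t Hx). unfold kd, Rdiv.
  apply continuity_2d_pt_mult. apply c2_s.
  apply continuity_2d_pt_inv.
  - apply continuity_2d_pt_mult. apply continuity_2d_pt_mult. apply continuity_2d_pt_const.
    apply c2_u. apply c2_w; auto.
  - pose proof (sqrt_lt_R0 _ H). apply Rgt_not_eq. apply Rmult_lt_0_compat; [|lra]. lra.
Qed.

Lemma c2_ed x t : x < 1 -> continuity_2d_pt ed x t.
Proof.
  intros Hx. pose proof (u_pos x t Hx). unfold ed, Rdiv.
  apply continuity_2d_pt_mult. apply continuity_2d_pt_opp. apply c2_s.
  apply continuity_2d_pt_inv.
  - apply continuity_2d_pt_mult. apply continuity_2d_pt_const. apply c2_w; auto.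
  - pose proof (sqrt_lt_R0 _ H). lra.
Qed.

Lemma param_deriv (f df : R -> R -> R) (x a b : R) :
  x < 1 ->
  (forall y t, y < 1 -> is_derive (fun z => f z t) y (df y t)) ->
  (forall y t, y < 1 -> continuous (f y) t) ->
  (forall y t, y < 1 -> continuity_2d_pt df y t) ->
  is_derive (fun y => RInt (f y) a b) x (RInt (df x) a b).
Proof.
  intros Hx Hd Hc Hc2.
  assert (Hloc: locally x (fun y => y < 1)) by (apply open_lt; auto).
  replace (RInt (df x) a b) with (RInt (fun t => Derive (fun u => f u t) x) a b).
  2: { apply RInt_ext. intros; apply is_derive_unique; auto. }
  apply (is_derive_RInt_param f a b x).
  - apply filter_imp with (2 := Hloc). intros y Hy t _. eexists; apply Hd; auto.
  - intros t _. apply continuity_2d_pt_ext_loc with (f := df).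
    + assert (Hd0 : 0 < (1 - x) / 2) by lra.
      exists (mkposreal _ Hd0). intros u v Hu _. simpl in Hu.
      apply eq_sym, is_derive_unique, Hd.
      apply Rabs_lt_between' in Hu. lra.
    + apply Hc2; auto.
  - apply filter_imp with (2:=Hloc). intros y Hy. apply (@ex_RInt_continuous R_CompleteNormedModule). intros; apply Hc; auto.
Qed.

Lemma K_der x : x < 1 -> is_derive K x (RInt (kd x) 0 (PI/2)).
Proof.
  intros Hx. apply (param_deriv kf kd x 0 (PI/2) Hx).
  - apply kf_der. - apply kf_cont. - apply c2_kd.
Qed.

Lemma E_der x : x < 1 -> is_derive E x (RInt (ed x) 0 (PI/2)).
Proof.
  intros Hx. apply (param_deriv ef ed x 0 (PI/2) Hx).
  - apply ef_der. - apply ef_cont. - apply c2_ed.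
Qed.

Lemma ef_ex x : x < 1 -> ex_RInt (ef x) 0 (PI/2).
Proof. intros Hx. apply (@ex_RInt_continuous R_CompleteNormedModule). intros; apply ef_cont; auto. Qed.
Lemma kf_ex x : x < 1 -> ex_RInt (kf x) 0 (PI/2).
Proof. intros Hx. apply (@ex_RInt_continuous R_CompleteNormedModule). intros; apply kf_cont; auto. Qed.

Lemma E_is x : x < 1 -> is_RInt (ef x) 0 (PI/2) (E x).
Proof. intros Hx. unfold E. apply (@RInt_correct R_CompleteNormedModule). apply ef_ex; auto. Qed.
Lemma K_is x : x < 1 -> is_RInt (kf x) 0 (PI/2) (K x).
Proof. intros Hx. rewrite K_eq. apply (@RInt_correct R_CompleteNormedModule). apply kf_ex; auto. Qed.

Lemma ed_int x : x < 1 -> x <> 0 -> RInt (ed x) 0 (PI/2) = (E x - K x) / (2 * x).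
Proof.
  intros Hx Hx0.
  apply is_RInt_unique.
  apply is_RInt_ext with (f := fun t => scal (/ (2 * x)) (minus (ef x t) (kf x t))).
  - intros t _. unfold scal, minus, plus, opp; simpl. unfold mult; simpl.
    unfold ed, ef, kf. pose proof (u_pos x t Hx) as Hu.
    pose proof (sqrt_lt_R0 _ Hu). pose proof (sqrt_sqrt _ (Rlt_le _ _ Hu)).
    set (w := sqrt _) in *. field_simplify_eq; try lra.
  - replace ((E x - K x) / (2 * x)) with (scal (/ (2 * x)) (minus (E x) (K x))).
    2: { unfold scal, minus, plus, opp; simpl. unfold mult; simpl. field. auto. }
    apply (@is_RInt_scal R_NormedModule). apply (@is_RInt_minus R_NormedModule).
    + apply E_is; auto.
    + apply K_is; auto.
Qed.

Definition Df (x t : R) := sin t * cos t / sqrt (1 - x * sin t ^ 2).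
Definition Dp (x t : R) := ((cos t ^ 2 - sin t ^ 2) * (1 - x * sin t ^ 2) + x * sin t ^ 2 * cos t ^ 2)
   / ((1 - x * sin t ^ 2) * sqrt (1 - x * sin t ^ 2)).

Lemma Df_der x t : x < 1 -> is_derive (Df x) t (Dp x t).
Proof. intros Hx. pose proof (u_pos x t Hx) as Hu. unfold Df, Dp. auto_derive.
  - sides.
  - replace (1 + - (x * (sin t * (sin t * 1)))) with (1 - x * sin t ^ 2) by ring.
    pose proof (sqrt_lt_R0 _ Hu). pose proof (sqrt_sqrt _ (Rlt_le _ _ Hu)).
    set (w := sqrt _) in *. set (u := 1 - x * sin t ^ 2) in *.
    rewrite H0. field. lra.
Qed.

Lemma Dp_cont x t : x < 1 -> continuous (Dp x) t.
Proof. intros Hx. apply (@ex_derive_continuous R_AbsRing R_NormedModule). unfold Dp. auto_derive.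
  pose proof (u_pos x t Hx). pose proof (sqrt_lt_R0 _ H).
  repeat split; try lra; try nra.
  apply Rmult_integral_contrapositive_currified; apply Rgt_not_eq; try lra.
  replace (1 + - (x * (sin t * (sin t * 1)))) with (1 - x * sin t ^ 2) by ring. lra.
Qed.

Lemma Dp_int x : x < 1 -> is_RInt (Dp x) 0 (PI/2) 0.
Proof.
  intros Hx.
  assert (Hz : minus (Df x (PI/2)) (Df x 0) = 0).
  { unfold Df, minus, plus, opp; simpl. rewrite cos_PI2, sin_0. field.
       pose proof (u_pos x 0 Hx). pose proof (u_pos x (PI/2) Hx). split; apply Rgt_not_eq, sqrt_lt_R0.
       rewrite sin_0 in H. lra. lra. }
  assert (HI : is_RInt (Dp x) 0 (PI/2) (minus (Df x (PI/2)) (Df x 0))).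
  { apply (@is_RInt_derive R_CompleteNormedModule).
    - intros; apply Df_der; auto.
    - intros; apply Dp_cont; auto. }
  rewrite Hz in HI. exact HI.
Qed.

Lemma kd_int x : 0 < x < 1 -> RInt (kd x) 0 (PI/2) = (E x / (1 - x) - K x) / (2 * x).
Proof.
  intros Hx.
  apply is_RInt_unique.
  apply is_RInt_ext with (f := fun t => scal (/ (2 * x)) (minus (scal (/ (1 - x)) (minus (ef x t) (scal x (Dp x t)))) (kf x t))).
  - intros t _. unfold scal, minus, plus, opp; simpl. unfold mult; simpl.
    unfold kd, ef, kf, Dp. pose proof (u_pos x t (proj2 Hx)) as Hu.
    pose proof (sqrt_lt_R0 _ Hu). pose proof (sqrt_sqrt _ (Rlt_le _ _ Hu)).
    replace (cos t ^ 2) with (1 - sin t ^ 2) by (pose proof (sin2_cos2 t); unfold Rsqr in *; nra).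
    set (w := sqrt _) in *.
    assert (Hs : sin t ^ 2 = (1 - w * w) / x) by (rewrite H0; field; lra).
    rewrite Hs. field. repeat split; try lra.
  - replace ((E x / (1 - x) - K x) / (2 * x)) with
      (scal (/ (2 * x)) (minus (scal (/ (1 - x)) (minus (E x) (scal x 0))) (K x))).
    2: { unfold scal, minus, plus, opp; simpl. unfold mult; simpl. field. lra. }
    apply (@is_RInt_scal R_NormedModule). apply (@is_RInt_minus R_NormedModule).
    + apply (@is_RInt_scal R_NormedModule). apply (@is_RInt_minus R_NormedModule).
      * apply E_is; lra.
      * apply (@is_RInt_scal R_NormedModule). apply Dp_int; lra.
    + apply K_is; lra.
Qed.

Lemma RInt_c (c : R) : RInt (fun _ => c) 0 (PI/2) = c * (PI/2).
Proof. rewrite RInt_const. unfold scal; simpl; unfold mult; simpl. ring. Qed.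

Lemma PI2_pos : 0 < PI/2.
Proof. pose proof PI_RGT_0. lra. Qed.

Lemma K_ge x : 0 <= x < 1 -> PI/2 <= K x.
Proof.
  intros Hx. rewrite K_eq.
  apply Rle_trans with (RInt (fun _ => 1) 0 (PI/2)). rewrite RInt_c; lra.
  apply RInt_le. pose proof PI2_pos; lra. apply ex_RInt_const. apply kf_ex; lra.
  intros t _. unfold kf. pose proof (u_pos x t (proj2 Hx)). pose proof (s_bound t).
  rewrite <- Rinv_1. apply Rinv_le_contravar. apply sqrt_lt_R0; lra.
  apply Rle_trans with (sqrt 1). apply sqrt_le_1_alt. nra. rewrite sqrt_1; lra.
Qed.

Lemma K_pos x : 0 <= x < 1 -> 0 < K x.
Proof. intros. pose proof (K_ge x H). pose proof PI2_pos. lra. Qed.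

Lemma E_le_K x : 0 <= x < 1 -> E x <= K x.
Proof.
  intros Hx. rewrite K_eq. apply RInt_le. pose proof PI2_pos; lra. apply ef_ex; lra. apply kf_ex; lra.
  intros t _. unfold ef, kf. pose proof (u_pos x t (proj2 Hx)). pose proof (s_bound t).
  pose proof (sqrt_lt_R0 _ H). pose proof (sqrt_sqrt _ (Rlt_le _ _ H)).
  set (w := sqrt _) in *. apply (Rmult_le_reg_r w); auto. rewrite Rinv_l by lra. nra.
Qed.

Lemma E_le x : 0 <= x < 1 -> E x <= PI/2.
Proof.
  intros Hx. apply Rle_trans with (RInt (fun _ => 1) 0 (PI/2)). 2: rewrite RInt_c; lra.
  apply RInt_le. pose proof PI2_pos; lra. apply ef_ex; lra. apply ex_RInt_const.
  intros t _. unfold ef. pose proof (u_pos x t (proj2 Hx)). pose proof (s_bound t).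
  apply Rle_trans with (sqrt 1). apply sqrt_le_1_alt. nra. rewrite sqrt_1; lra.
Qed.

Lemma E_ge x : 0 <= x < 1 -> (1 - x) * K x <= E x.
Proof.
  intros Hx. rewrite K_eq.
  replace ((1 - x) * RInt (kf x) 0 (PI/2)) with (RInt (fun t => scal (1-x) (kf x t)) 0 (PI/2))
    by (rewrite (@RInt_scal R_CompleteNormedModule); [reflexivity|apply kf_ex; lra]).
  apply RInt_le. pose proof PI2_pos; lra.
  apply (@ex_RInt_scal R_NormedModule). apply kf_ex; lra. apply ef_ex; lra.
  intros t _. unfold scal; simpl; unfold mult; simpl. unfold ef, kf. pose proof (u_pos x t (proj2 Hx)). pose proof (s_bound t).
  pose proof (sqrt_lt_R0 _ H). pose proof (sqrt_sqrt _ (Rlt_le _ _ H)).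
  set (w := sqrt _) in *. apply (Rmult_le_reg_r w); auto. rewrite Rmult_assoc, Rinv_l by lra. nra.
Qed.


Lemma cont_pt_of_ex_derive' f x : ex_derive f x -> continuity_pt f x.
Proof. intros H. apply continuity_pt_filterlim. exact (ex_derive_continuous f x H). Qed.

Lemma der_cont f df x : is_derive f x df -> continuity_pt f x.
Proof. intros H. apply cont_pt_of_ex_derive'. exists df; auto. Qed.

Lemma mvt f df a b : a <= b -> (forall x, a <= x <= b -> is_derive f x (df x)) ->
  exists c, a <= c <= b /\ f b - f a = df c * (b - a).
Proof.
  intros Hab Hd. destruct (MVT_gen f a b df) as [c [Hc Heq]].
  - intros x Hx. rewrite Rmin_left, Rmax_right in Hx by lra. apply Hd; lra.
  - intros x Hx. rewrite Rmin_left, Rmax_right in Hx by lra. apply der_cont with (df x). apply Hd; lra.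
  - exists c. rewrite Rmin_left, Rmax_right in Hc by lra. auto.
Qed.

Lemma decr_of_der g dg a b : (forall x, a < x < b -> is_derive g x (dg x)) ->
  (forall x, a < x < b -> dg x <= 0) -> forall x y, a < x -> x <= y -> y < b -> g y <= g x.
Proof.
  intros Hd Hs x y Hx Hxy Hy. destruct (mvt g dg x y Hxy) as [c [Hc Heq]].
  intros; apply Hd; lra. pose proof (Hs c ltac:(lra)). nra.
Qed.

Lemma incr_of_der g dg a b : (forall x, a < x < b -> is_derive g x (dg x)) ->
  (forall x, a < x < b -> 0 <= dg x) -> forall x y, a < x -> x <= y -> y < b -> g x <= g y.
Proof.
  intros Hd Hs x y Hx Hxy Hy. destruct (mvt g dg x y Hxy) as [c [Hc Heq]].
  intros; apply Hd; lra. pose proof (Hs c ltac:(lra)). nra.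
Qed.

Lemma concave_aux f df a b : (forall x, a < x < b -> is_derive f x (df x)) ->
  (forall x y, a < x -> x <= y -> y < b -> df y <= df x) ->
  forall x y t, a < x -> x <= y -> y < b -> 0 <= t <= 1 ->
  t * f x + (1 - t) * f y <= f (t * x + (1 - t) * y).
Proof.
  intros Hd Hm x y t Hx Hxy Hy Ht. set (z := t * x + (1 - t) * y).
  assert (Hz : x <= z <= y) by (unfold z; nra).
  destruct (mvt f df x z (proj1 Hz)) as [c1 [Hc1 E1]]. intros; apply Hd; lra.
  destruct (mvt f df z y (proj2 Hz)) as [c2 [Hc2 E2]]. intros; apply Hd; lra.
  pose proof (Hm c1 c2 ltac:(lra) ltac:(lra) ltac:(lra)).
  assert (z - x = (1 - t) * (y - x)) by (unfold z; ring).
  assert (y - z = t * (y - x)) by (unfold z; ring).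
  assert (t * (1 - t) * (y - x) * (df c2 - df c1) <= 0).
  { assert (0 <= t*(1-t)*(y-x)) by (apply Rmult_le_pos; [apply Rmult_le_pos|]; lra). nra. }
  nra.
Qed.

Lemma concave_of_der f df a b : (forall x, a < x < b -> is_derive f x (df x)) ->
  (forall x y, a < x -> x <= y -> y < b -> df y <= df x) -> concave_on f a b.
Proof.
  intros Hd Hm x y t Hx Hy Ht. destruct (Rle_dec x y).
  - apply (concave_aux f df a b); auto; lra.
  - pose proof (concave_aux f df a b Hd Hm y x (1 - t) ltac:(lra) ltac:(lra) ltac:(lra) ltac:(lra)).
    replace (t * x + (1 - t) * y) with ((1 - t) * y + (1 - (1 - t)) * x) by ring. lra.
Qed.

Lemma convex_of_der f df a b : (forall x, a < x < b -> is_derive f x (df x)) ->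
  (forall x y, a < x -> x <= y -> y < b -> df x <= df y) -> convex_on f a b.
Proof.
  intros Hd Hm.
  assert (H : concave_on (fun x => - f x) a b).
  { apply (concave_of_der _ (fun x => - df x)).
    - intros x Hx. apply (@is_derive_opp R_AbsRing R_NormedModule). apply Hd; auto.
    - intros x y H1 H2 H3. pose proof (Hm x y H1 H2 H3). lra. }
  intros x y t Hx Hy Ht. pose proof (H x y t Hx Hy Ht). simpl in H0. lra.
Qed.

Lemma concave_slope f df a b : concave_on f a b -> (forall x, a < x < b -> is_derive f x (df x)) ->
  forall x y, a < x -> x < y -> y < b -> df y <= (f y - f x) / (y - x) <= df x.
Proof.
  intros Hc Hd x y Hx Hxy Hy. set (m := (f y - f x) / (y - x)).
  assert (Hm : m * (y - x) = f y - f x) by (unfold m; field; lra).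
  split.
  - destruct (Rle_dec (df y) m) as [|Hn]; auto. exfalso.
    assert (Hdy := Hd y ltac:(lra)). apply is_derive_Reals in Hdy.
    destruct (Hdy (df y - m) ltac:(lra)) as [del Hdel].
    set (k := Rmin (del / 2) ((y - x) / 2)).
    assert (Hk : 0 < k) by (unfold k; apply Rmin_glb_lt; pose proof (cond_pos del); lra).
    assert (Hk2 : k <= del / 2) by apply Rmin_l.
    assert (Hk3 : k <= (y - x) / 2) by apply Rmin_r.
    specialize (Hdel (- k) ltac:(lra)). rewrite Rabs_Ropp, Rabs_pos_eq in Hdel by lra.
    specialize (Hdel ltac:(pose proof (cond_pos del); lra)).
    apply Rabs_lt_between in Hdel.
    set (q := (f (y + - k) - f y) / - k) in *.
    assert (Hq : q * (- k) = f (y + - k) - f y) by (unfold q; field; lra).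
    pose proof (Hc x y (k / (y - x)) ltac:(lra) ltac:(lra)) as Hcc.
    assert (0 <= k / (y - x) <= 1).
    { split. apply Rdiv_le_0_compat; lra. apply Rmult_le_reg_r with (y - x). lra.
      unfold Rdiv. rewrite Rmult_assoc, Rinv_l by lra. lra. }
    specialize (Hcc H).
    replace (k / (y - x) * x + (1 - k / (y - x)) * y) with (y + - k) in Hcc by (field; lra).
    assert (k / (y - x) * f x + (1 - k / (y - x)) * f y = f y - k * m).
    { unfold m. field. lra. }
    nra.
  - destruct (Rle_dec m (df x)) as [|Hn]; auto. exfalso.
    assert (Hdx := Hd x ltac:(lra)). apply is_derive_Reals in Hdx.
    destruct (Hdx (m - df x) ltac:(lra)) as [del Hdel].
    set (k := Rmin (del / 2) ((y - x) / 2)).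
    assert (Hk : 0 < k) by (unfold k; apply Rmin_glb_lt; pose proof (cond_pos del); lra).
    assert (Hk2 : k <= del / 2) by apply Rmin_l.
    assert (Hk3 : k <= (y - x) / 2) by apply Rmin_r.
    specialize (Hdel k ltac:(lra)). rewrite Rabs_pos_eq in Hdel by lra.
    specialize (Hdel ltac:(pose proof (cond_pos del); lra)).
    apply Rabs_lt_between in Hdel.
    set (q := (f (x + k) - f x) / k) in *.
    assert (Hq : q * k = f (x + k) - f x) by (unfold q; field; lra).
    pose proof (Hc x y (1 - k / (y - x)) ltac:(lra) ltac:(lra)) as Hcc.
    assert (0 <= 1 - k / (y - x) <= 1).
    { assert (0 <= k / (y - x) <= 1/2).
      { split. apply Rdiv_le_0_compat; lra. apply Rmult_le_reg_r with (y - x). lra.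
        unfold Rdiv. rewrite Rmult_assoc, Rinv_l by lra. lra. }
      lra. }
    specialize (Hcc H).
    replace ((1 - k / (y - x)) * x + (1 - (1 - k / (y - x))) * y) with (x + k) in Hcc by (field; lra).
    assert ((1 - k / (y - x)) * f x + (1 - (1 - k / (y - x))) * f y = f x + k * m).
    { unfold m. field. lra. }
    nra.
Qed.

Lemma concave_der_mono f df a b : concave_on f a b -> (forall x, a < x < b -> is_derive f x (df x)) ->
  forall x y, a < x -> x < y -> y < b -> df y <= df x.
Proof. intros. pose proof (concave_slope f df a b H H0 x y H1 H2 H3). lra. Qed.

Lemma convex_der_mono f df a b : convex_on f a b -> (forall x, a < x < b -> is_derive f x (df x)) ->
  forall x y, a < x -> x < y -> y < b -> df x <= df y.
Proof.
  intros Hc Hd x y H1 H2 H3.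
  assert (Hc' : concave_on (fun x => - f x) a b).
  { intros u v t Hu Hv Ht. pose proof (Hc u v t Hu Hv Ht). lra. }
  pose proof (concave_der_mono (fun x => - f x) (fun x => - df x) a b Hc') as HH.
  assert (- df y <= - df x); [|lra]. apply HH; auto.
  intros z Hz. apply (@is_derive_opp R_AbsRing R_NormedModule). apply Hd; auto.
Qed.

Lemma comparison g dg x : 0 < x ->
  (forall y, 0 < y <= x -> is_derive g y (dg y)) ->
  (forall y, 0 < y <= x -> g y < 0 -> 0 < dg y) ->
  (forall y, 0 < y <= x -> - y <= g y) -> 0 <= g x.
Proof.
  intros Hx Hd Hp Hb. destruct (Rle_dec 0 (g x)) as [|Hn]; auto. exfalso.
  set (y0 := Rmin (x / 2) (- g x / 2)).
  assert (Hy0 : 0 < y0) by (unfold y0; apply Rmin_glb_lt; lra).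
  assert (Hy1 : y0 <= x / 2) by apply Rmin_l.
  assert (Hy2 : y0 <= - g x / 2) by apply Rmin_r.
  pose proof (Hb y0 ltac:(lra)) as Hgy0.
  destruct (continuity_ab_min g y0 x ltac:(lra)) as [m [Hmin Hm]].
  { intros c Hc. apply der_cont with (dg c). apply Hd. lra. }
  pose proof (Hmin x ltac:(lra)).
  pose proof (Hmin y0 ltac:(lra)).
  assert (Hmy : y0 < m).
  { destruct (Rle_lt_dec m y0); auto. assert (m = y0) by lra. subst m. lra. }
  assert (Hgm : g m < 0) by lra.
  pose proof (Hp m ltac:(lra) Hgm) as Hdm.
  pose proof (Hd m ltac:(lra)) as Hdm'. apply is_derive_Reals in Hdm'.
  destruct (Hdm' (dg m) Hdm) as [del Hdel].
  set (k := Rmin (del / 2) ((m - y0) / 2)).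
  assert (Hk : 0 < k) by (unfold k; apply Rmin_glb_lt; pose proof (cond_pos del); lra).
  assert (Hk2 : k <= del / 2) by apply Rmin_l.
  assert (Hk3 : k <= (m - y0) / 2) by apply Rmin_r.
  specialize (Hdel (- k) ltac:(lra)). rewrite Rabs_Ropp, Rabs_pos_eq in Hdel by lra.
  specialize (Hdel ltac:(pose proof (cond_pos del); lra)).
  apply Rabs_lt_between in Hdel.
  set (q := (g (m + - k) - g m) / - k) in *.
  assert (Hq : q * (- k) = g (m + - k) - g m) by (unfold q; field; lra).
  pose proof (Hmin (m + - k) ltac:(lra)).
  nra.
Qed.


Definition r x := E x / K x.
Definition Rc x y := - y ^ 2 + 2 * (1 - x) * y - (1 - x).
Definition rd x := Rc x (r x) / (2 * x * (1 - x)).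

Ltac fixD Hr := match goal with |- context [Derive ?f ?y] =>
  replace (Derive f y) with (rd y) by (symmetry; apply is_derive_unique; exact Hr) end.

Lemma r_der x : 0 < x < 1 -> is_derive r x (rd x).
Proof.
  intros Hx. pose proof (K_pos x ltac:(lra)).
  pose proof (is_derive_div E K x _ _ (E_der x ltac:(lra)) (K_der x ltac:(lra)) ltac:(lra)) as H1.
  rewrite ed_int, kd_int in H1 by lra.
  assert (Heq : ((E x - K x) / (2 * x) * K x - E x * ((E x / (1 - x) - K x) / (2 * x))) / K x ^ 2 = rd x).
  { unfold rd, Rc, r. field. lra. }
  rewrite Heq in H1. exact H1.
Qed.

Lemma r_ge x : 0 < x < 1 -> 1 - x <= r x.
Proof.
  intros Hx. pose proof (K_pos x ltac:(lra)). pose proof (E_ge x ltac:(lra)).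
  unfold r. apply Rmult_le_reg_r with (K x); auto. unfold Rdiv. rewrite Rmult_assoc, Rinv_l by lra. lra.
Qed.

Lemma r_le1 x : 0 < x < 1 -> r x <= 1.
Proof.
  intros Hx. pose proof (K_pos x ltac:(lra)). pose proof (E_le_K x ltac:(lra)).
  unfold r. apply Rmult_le_reg_r with (K x); auto. unfold Rdiv. rewrite Rmult_assoc, Rinv_l by lra. lra.
Qed.

Lemma r_upper x : 0 < x < 1 -> r x <= 1 - x / 2.
Proof.
  intros Hx.
  assert (0 <= (fun y => 1 - y / 2 - r y) x); [|simpl in *; lra].
  apply (comparison (fun y => 1 - y / 2 - r y) (fun y => - / 2 - rd y) x); try lra.
  - intros y Hy. pose proof (r_der y ltac:(lra)) as Hr. auto_derive.
    + exists (rd y); exact Hr.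
    + fixD Hr. ring.
  - intros y Hy Hg. simpl in Hg. pose proof (r_le1 y ltac:(lra)).
    assert (Hlt : Rc y (r y) < - y * (1 - y)).
    { unfold Rc. assert (0 < r y - (1 - y / 2)) by lra.
      assert (0 < r y + (1 - y/2) - 2 * (1 - y)) by lra. nra. }
    assert (Hd : rd y < - / 2).
    { unfold rd. apply Rmult_lt_reg_r with (2 * y * (1 - y)). nra.
      unfold Rdiv. rewrite Rmult_assoc, Rinv_l by nra. nra. }
    lra.
  - intros y Hy. simpl. pose proof (r_le1 y ltac:(lra)). lra.
Qed.

Definition Q y := 1 - 3 * y + 17 / 8 * y ^ 2.
Definition phi y := y + sqrt (Q y).
Definition dphi y := 1 + (17 / 4 * y - 3) / (2 * sqrt (Q y)).

Lemma P_pos y : 0 <= y <= 2/3 -> 0 < 2 - 7*y + 9*y^2 - 17/4*y^3.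
Proof. intros. assert (0 <= (2/3-y) * (26/9 - 37/6*y + 17/4*y^2)).
apply Rmult_le_pos. lra. nra. lra. Qed.
Lemma C_pos y : 0 <= y <= 2/3 -> 0 < 3/2 - 309/64*y + 379/64*y^2 - 1377/512*y^3.
Proof. intros. assert (0 <= (2/3-y) * (797/384 - 1057/256*y + 1377/512*y^2)).
apply Rmult_le_pos. lra. nra. lra. Qed.

Lemma margin y : 0 < y < 2/3 -> 0 < Q y -> 2 * y * (1 - y) * dphi y < Rc y (phi y).
Proof.
  intros Hy HQ. unfold dphi, phi.
  pose proof (sqrt_lt_R0 _ HQ) as HS. pose proof (sqrt_sqrt _ (Rlt_le _ _ HQ)) as HS2.
  set (S := sqrt (Q y)) in *. clearbody S.
  set (A := 2 - 4*y + 25/8*y^2). set (P := 2 - 7*y + 9*y^2 - 17/4*y^3).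
  assert (Hid : (Rc y (y + S) - 2 * y * (1 - y) * (1 + (17 / 4 * y - 3) / (2 * S))) * S = P - A * S).
  { unfold Rc.
    replace ((- (y + S) ^ 2 + 2 * (1 - y) * (y + S) - (1 - y) - 2 * y * (1 - y) * (1 + (17 / 4 * y - 3) / (2 * S))) * S)
      with ((-y^2 + 2*(1-y)*y - (1-y) - 2*y*(1-y)) * S + (2*(1-y) - 2*y) * (S*S) - (S*S)*S - y*(1-y)*(17/4*y - 3)) by (field; lra).
    rewrite HS2. unfold A, P, Q. field. }
  assert (HA : 0 < A) by (unfold A; nra).
  assert (HP : 0 < P) by (apply P_pos; lra).
  assert (HD : P * P - A * A * (S * S) = y^3 * (3/2 - 309/64*y + 379/64*y^2 - 1377/512*y^3)).
  { rewrite HS2. unfold A, P, Q. field. }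
  pose proof (C_pos y ltac:(lra)).
  assert (0 < y ^ 3) by (apply pow_lt; lra).
  assert (0 < P - A * S).
  { assert (0 < (P - A * S) * (P + A * S)) by nra.
    assert (0 < P + A * S) by nra. nra. }
  nra.
Qed.

Lemma Q_mono y x : 0 < y <= x -> x < 2/3 -> Q x <= Q y.
Proof. intros. unfold Q. nra. Qed.

Lemma phi_ge_c y : 0 < y < 2/3 -> 0 < Q y -> 1 - y <= phi y.
Proof.
  intros Hy HQ. unfold phi. destruct (Rle_dec (1 - 2 * y) 0). pose proof (sqrt_pos (Q y)). lra.
  assert (1 - 2 * y <= sqrt (Q y)); [|lra].
  rewrite <- (sqrt_pow2 (1 - 2*y)) by lra. apply sqrt_le_1_alt. unfold Q. nra.
Qed.

Lemma phi_le1 y : 0 < y < 2/3 -> 0 < Q y -> phi y <= 1.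
Proof.
  intros Hy HQ. unfold phi.
  assert (sqrt (Q y) <= 1 - y); [|lra].
  rewrite <- (sqrt_pow2 (1 - y)) by lra. apply sqrt_le_1_alt. unfold Q. nra.
Qed.

Lemma phi_lower x : 0 < x < 2/3 -> 0 < Q x -> phi x <= r x.
Proof.
  intros Hx HQx.
  assert (0 <= (fun y => r y - phi y) x); [|simpl in *; lra].
  apply (comparison (fun y => r y - phi y) (fun y => rd y - dphi y) x); try lra.
  - intros y Hy. pose proof (r_der y ltac:(lra)) as Hr.
    pose proof (Q_mono y x Hy ltac:(lra)) as HQy.
    assert (HQ : 0 < Q y) by lra.
    unfold phi, dphi. unfold Q in *. auto_derive.
    + split. exists (rd y); exact Hr. split; [lra|exact I].
    + fixD Hr. pose proof (sqrt_lt_R0 _ HQ).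
      replace (1 + - (3 * y) + 17 / 8 * (y * (y * 1))) with (1 - 3*y + 17/8*y^2) by ring.
      field. lra.
  - intros y Hy Hg. simpl in Hg.
    pose proof (Q_mono y x Hy ltac:(lra)) as HQy.
    assert (HQ : 0 < Q y) by lra.
    pose proof (margin y ltac:(lra) HQ) as Hm.
    pose proof (r_ge y ltac:(lra)). pose proof (phi_ge_c y ltac:(lra) HQ).
    assert (Hp : 0 <= Rc y (r y) - Rc y (phi y)).
    { unfold Rc. assert (Hf : - r y ^ 2 + 2 * (1 - y) * r y - (1 - y) - (- phi y ^ 2 + 2 * (1 - y) * phi y - (1 - y))
        = (2 * (1 - y) - r y - phi y) * (r y - phi y)) by ring.
      rewrite Hf. assert (2 * (1 - y) - r y - phi y <= 0) by lra. assert (r y - phi y < 0) by lra. nra. }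
    assert (Hpos : 0 < 2 * y * (1 - y)) by nra.
    assert (rd y - dphi y = (Rc y (r y) - 2 * y * (1 - y) * dphi y) / (2 * y * (1 - y))).
    { unfold rd. field. lra. }
    rewrite H1. apply Rdiv_lt_0_compat; lra.
  - intros y Hy. simpl.
    pose proof (Q_mono y x Hy ltac:(lra)) as HQy.
    pose proof (r_ge y ltac:(lra)). pose proof (phi_le1 y ltac:(lra) ltac:(lra)). lra.
Qed.

Definition F p x := p * ln (1 - x) + ln (K x).
Definition fd p x := - p / (1 - x) + (r x - (1 - x)) / (2 * x * (1 - x)).
Definition fdd p x := (- 4 * p * x ^ 2 + (1 - x) * x - 2 * (1 - 2 * x) * (r x - (1 - x)) - (r x - (1 - x)) ^ 2)
   / (4 * x ^ 2 * (1 - x) ^ 2).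

Lemma F_der p x : 0 < x < 1 -> is_derive (F p) x (fd p x).
Proof.
  intros Hx. pose proof (K_pos x ltac:(lra)). pose proof (K_der x ltac:(lra)) as HK.
  unfold F. auto_derive.
  - repeat split; try lra. exists (RInt (kd x) 0 (PI/2)); exact HK.
  - replace (Derive (fun x0 => K x0) x) with (RInt (kd x) 0 (PI/2)) by (symmetry; apply is_derive_unique; exact HK).
    rewrite kd_int by lra. unfold fd, r. field. lra.
Qed.

Lemma fd_der p x : 0 < x < 1 -> is_derive (fd p) x (fdd p x).
Proof.
  intros Hx. pose proof (r_der x Hx) as Hr.
  unfold fd. auto_derive.
  - repeat split; try lra; try nra. exists (rd x); exact Hr.
  - fixD Hr. unfold fdd, rd, Rc. field. lra.
Qed.

Lemma fdd_neg p x : 7/32 <= p -> 0 < x < 1 -> fdd p x <= 0.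
Proof.
  intros Hp Hx. unfold fdd.
  assert (HQ : Q x <= (r x - x) ^ 2).
  { destruct (Rle_dec (Q x) 0). pose proof (pow2_ge_0 (r x - x)); lra.
    destruct (Rlt_dec x (2/3)).
    - pose proof (phi_lower x ltac:(lra) ltac:(lra)). unfold phi in H.
      pose proof (sqrt_pos (Q x)). pose proof (sqrt_sqrt (Q x) ltac:(lra)).
      assert (sqrt (Q x) <= r x - x) by lra. nra.
    - pose proof (r_upper x Hx).
      assert (r x - x <= 1 - 3 * x / 2) by lra.
      assert (0 <= (1 - 3 * x / 2 - (r x - x)) * (- (r x - x) - (1 - 3 * x / 2))) by (apply Rmult_le_pos; lra).
      unfold Q. nra. }
  unfold Q in HQ.
  assert (HD : 0 < 4 * x ^ 2 * (1 - x) ^ 2).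
  { assert (0 < x ^ 2) by (apply pow_lt; lra). assert (0 < (1 - x) ^ 2) by (apply pow_lt; lra). nra. }
  assert (0 < / (4 * x ^ 2 * (1 - x) ^ 2)) by (apply Rinv_0_lt_compat; auto).
  assert (0 <= x ^ 2) by (apply pow_le; lra).
  assert (0 <= (p - 7/32) * x ^ 2) by (apply Rmult_le_pos; lra).
  assert (HN : - 4 * p * x ^ 2 + (1 - x) * x - 2 * (1 - 2 * x) * (r x - (1 - x)) - (r x - (1 - x)) ^ 2 <= 0) by nra.
  unfold Rdiv. rewrite <- (Rmult_0_l (/ (4 * x ^ 2 * (1 - x) ^ 2))).
  apply Rmult_le_compat_r; lra.
Qed.

Lemma fdd_pos p x : p <= 0 -> 0 < x < 1 -> 0 <= fdd p x.
Proof.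
  intros Hp Hx. unfold fdd.
  pose proof (r_upper x Hx). pose proof (r_ge x Hx).
  assert (HQ : (r x - x) ^ 2 <= 1 - 3 * x + 3 * x ^ 2).
  { assert (0 <= (r x - x - (1 - 2 * x)) * (1 - 3 * x / 2 - (r x - x))) by (apply Rmult_le_pos; lra).
    nra. }
  assert (HD : 0 < 4 * x ^ 2 * (1 - x) ^ 2).
  { assert (0 < x ^ 2) by (apply pow_lt; lra). assert (0 < (1 - x) ^ 2) by (apply pow_lt; lra). nra. }
  assert (0 < / (4 * x ^ 2 * (1 - x) ^ 2)) by (apply Rinv_0_lt_compat; auto).
  assert (0 <= x ^ 2) by (apply pow_le; lra).
  assert (0 <= - p * x ^ 2) by (apply Rmult_le_pos; lra).
  assert (HN : 0 <= - 4 * p * x ^ 2 + (1 - x) * x - 2 * (1 - 2 * x) * (r x - (1 - x)) - (r x - (1 - x)) ^ 2) by nra.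
  unfold Rdiv. apply Rmult_le_pos; lra.
Qed.

Lemma h_pos p x : 0 < x < 1 -> 0 < h p x.
Proof. intros. unfold h, Rpower. apply Rmult_lt_0_compat. apply exp_pos. apply K_pos; lra. Qed.

Lemma ln_h p x : 0 < x < 1 -> ln (h p x) = F p x.
Proof.
  intros Hx. unfold h, F, Rpower. rewrite ln_mult. rewrite ln_exp. reflexivity.
  apply exp_pos. apply K_pos; lra.
Qed.

Lemma in01 x y t : 0 < x < 1 -> 0 < y < 1 -> 0 <= t <= 1 -> 0 < t * x + (1 - t) * y < 1.
Proof.
  intros. assert (0 <= t * (1 - x)) by (apply Rmult_le_pos; lra).
  assert (0 <= (1 - t) * (1 - y)) by (apply Rmult_le_pos; lra).
  assert (0 <= t * x) by (apply Rmult_le_pos; lra).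
  assert (0 <= (1 - t) * y) by (apply Rmult_le_pos; lra).
  destruct (Rle_dec x y).
  - assert (0 <= (1 - t) * (y - x)) by (apply Rmult_le_pos; lra).
    assert (0 <= t * (1 - y)) by (apply Rmult_le_pos; lra). split; nra.
  - assert (0 <= t * (x - y)) by (apply Rmult_le_pos; lra).
    assert (0 <= (1 - t) * (1 - x)) by (apply Rmult_le_pos; lra). split; nra.
Qed.

Lemma concave_ext f g : (forall x, 0 < x < 1 -> f x = g x) -> concave_on f 0 1 -> concave_on g 0 1.
Proof.
  intros He Hc x y t Hx Hy Ht.
  rewrite <- (He x Hx), <- (He y Hy), <- (He _ (in01 x y t Hx Hy Ht)). apply Hc; auto.
Qed.

Lemma convex_ext f g : (forall x, 0 < x < 1 -> f x = g x) -> convex_on f 0 1 -> convex_on g 0 1.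
Proof.
  intros He Hc x y t Hx Hy Ht.
  rewrite <- (He x Hx), <- (He y Hy), <- (He _ (in01 x y t Hx Hy Ht)). apply Hc; auto.
Qed.

Lemma concave_F p : 7/32 <= p -> concave_on (F p) 0 1.
Proof.
  intros Hp. apply (concave_of_der (F p) (fd p)).
  - intros; apply F_der; auto.
  - intros x y H1 H2 H3. apply (decr_of_der (fd p) (fdd p) 0 1); auto.
    + intros; apply fd_der; auto.
    + intros; apply fdd_neg; auto.
Qed.

Lemma convex_F p : p <= 0 -> convex_on (F p) 0 1.
Proof.
  intros Hp. apply (convex_of_der (F p) (fd p)).
  - intros; apply F_der; auto.
  - intros x y H1 H2 H3. apply (incr_of_der (fd p) (fdd p) 0 1); auto.
    + intros; apply fd_der; auto.
    + intros; apply fdd_pos; auto.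
Qed.

Lemma fd_upper p x : 0 < x < 1 -> fd p x <= (1/4 - p) / (1 - x).
Proof.
  intros Hx. pose proof (r_upper x Hx). unfold fd.
  assert ((r x - (1 - x)) / (2 * x * (1 - x)) <= / 4 / (1 - x)).
  { apply Rmult_le_reg_r with (2 * x * (1 - x)). nra.
    replace (/ 4 / (1 - x) * (2 * x * (1 - x))) with (x / 2) by (field; lra).
    unfold Rdiv. rewrite Rmult_assoc, Rinv_l by nra. lra. }
  replace ((1/4 - p) / (1 - x)) with (- p / (1 - x) + / 4 / (1 - x)) by (field; lra). lra.
Qed.

Lemma nec_concave p : concave_on (F p) 0 1 -> 7/32 <= p.
Proof.
  intros Hc. destruct (Rle_dec (7/32) p) as [|Hn]; auto. exfalso.
  set (a := 1/2 - 2 * p). set (e := 2 * a - 1/8).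
  assert (Ha : 1/16 < a) by (unfold a; lra). assert (He : 0 < e) by (unfold e; lra).
  set (y := Rmin (1/2) (e / (2 * (3 * a + a ^ 2)))).
  assert (Hpos2 : 0 < 2 * (3 * a + a ^ 2)) by nra.
  assert (Hy0 : 0 < y) by (unfold y; apply Rmin_glb_lt; [lra| apply Rdiv_lt_0_compat; lra]).
  assert (Hy1 : y <= 1/2) by apply Rmin_l.
  assert (Hy2 : y * (2 * (3 * a + a ^ 2)) <= e).
  { assert (y <= e / (2 * (3 * a + a ^ 2))) by apply Rmin_r.
    apply Rmult_le_compat_r with (r := 2 * (3 * a + a ^ 2)) in H; [|lra].
    unfold Rdiv in H. rewrite Rmult_assoc, Rinv_l in H by lra. lra. }
  assert (HQy : 0 < Q y).
  { pose proof (Q_mono y (1/2) ltac:(lra) ltac:(lra)). unfold Q in *. lra. }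
  pose proof (phi_lower y ltac:(lra) HQy) as Hphi. unfold phi in Hphi.
  pose proof (sqrt_pos (Q y)) as HS0. pose proof (sqrt_sqrt (Q y) ltac:(lra)) as HS2.
  set (S := sqrt (Q y)) in *. clearbody S.
  assert (HL : 1 - 3 * y / 2 - a * y ^ 2 < S).
  { destruct (Rlt_dec (1 - 3 * y / 2 - a * y ^ 2) 0). lra.
    assert (Hid : Q y - (1 - 3 * y / 2 - a * y ^ 2) ^ 2 = y ^ 2 * (e - 3 * a * y - a ^ 2 * y ^ 2))
      by (unfold Q, e; field).
    assert (0 < y ^ 2) by (apply pow_lt; lra).
    assert (a ^ 2 * y ^ 2 <= a ^ 2 * y) by (assert (0 <= a^2) by nra; nra).
    assert (0 < e - 3 * a * y - a ^ 2 * y ^ 2) by nra.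
    assert (0 < Q y - (1 - 3 * y / 2 - a * y ^ 2) ^ 2) by (rewrite Hid; nra).
    nra. }
  assert (Hry : 1 - y / 2 - a * y ^ 2 < r y) by lra.
  set (L0 := 1/4 - p). assert (HL0 : 0 < L0) by (unfold L0; lra).
  assert (Hfy : L0 < fd p y).
  { assert (Hid : fd p y - L0 = (r y - (1 - y / 2 - a * y ^ 2)) / (2 * y * (1 - y)))
      by (unfold fd, L0, a; field; lra).
    assert (0 < (r y - (1 - y / 2 - a * y ^ 2)) / (2 * y * (1 - y))) by (apply Rdiv_lt_0_compat; nra).
    lra. }
  set (del := fd p y - L0). assert (Hdel : 0 < del) by (unfold del; lra).
  set (x := Rmin (y / 2) (del / (2 * (L0 + del)))).
  assert (Hx0 : 0 < x) by (unfold x; apply Rmin_glb_lt; [lra| apply Rdiv_lt_0_compat; lra]).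
  assert (Hx1 : x <= y / 2) by apply Rmin_l.
  assert (Hx2 : x * (2 * (L0 + del)) <= del).
  { assert (x <= del / (2 * (L0 + del))) by apply Rmin_r.
    apply Rmult_le_compat_r with (r := 2 * (L0 + del)) in H; [|lra].
    unfold Rdiv in H. rewrite Rmult_assoc, Rinv_l in H by lra. lra. }
  pose proof (concave_der_mono (F p) (fd p) 0 1 Hc (fun z Hz => F_der p z Hz) x y ltac:(lra) ltac:(lra) ltac:(lra)) as Hm.
  pose proof (fd_upper p x ltac:(lra)) as Hu. fold L0 in Hu.
  assert (L0 / (1 - x) < L0 + del).
  { apply Rmult_lt_reg_r with (1 - x). lra. unfold Rdiv. rewrite Rmult_assoc, Rinv_l by lra. nra. }
  unfold del in *. lra.
Qed.

Lemma K_big M : 0 < M -> M <= K (1 - exp (- (2 * M))).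
Proof.
  intros HM. set (s := exp (- M)). assert (Hs : 0 < s) by apply exp_pos.
  assert (Hc : exp (- (2 * M)) = s * s).
  { unfold s. rewrite <- exp_plus. f_equal. ring. }
  set (x := 1 - exp (- (2 * M))).
  assert (Hs1 : s < 1).
  { unfold s. rewrite <- exp_0. apply exp_increasing. lra. }
  assert (Hx : 0 < x < 1) by (unfold x; rewrite Hc; split; nra).
  pose proof PI2_pos as HP.
  set (g := fun t => / (s + (PI / 2 - t))).
  assert (Hg : is_RInt g 0 (PI/2) (ln (s + PI/2) - ln s)).
  { assert (HI : is_RInt g 0 (PI/2) (minus ((fun t => - ln (s + (PI/2 - t))) (PI/2)) ((fun t => - ln (s + (PI/2 - t))) 0))).
    { apply (@is_RInt_derive R_CompleteNormedModule (fun t => - ln (s + (PI/2 - t))) g 0 (PI/2)).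
      - intros t Ht. rewrite Rmin_left, Rmax_right in Ht by lra. unfold g. auto_derive. lra. field. lra.
      - intros t Ht. rewrite Rmin_left, Rmax_right in Ht by lra.
        apply (@ex_derive_continuous R_AbsRing R_NormedModule). unfold g. auto_derive. lra. }
    assert (Heq : minus ((fun t => - ln (s + (PI/2 - t))) (PI/2)) ((fun t => - ln (s + (PI/2 - t))) 0) = ln (s + PI/2) - ln s).
    { cbv beta. unfold minus, plus, opp; simpl.
      replace (s + (PI/2 - PI/2)) with s by ring. replace (s + (PI/2 - 0)) with (s + PI/2) by ring. ring. }
    cbv beta in HI. cbv beta in Heq. rewrite Heq in HI. exact HI. }
  assert (HlnS : ln s = - M) by (unfold s; apply ln_exp).
  assert (Hln : 0 < ln (s + PI / 2)).
  { rewrite <- ln_1. apply ln_increasing. lra. pose proof PI2_1. lra. }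
  apply Rle_trans with (RInt g 0 (PI/2)).
  { rewrite (is_RInt_unique g 0 (PI/2) _ Hg). lra. }
  rewrite K_eq. apply RInt_le. lra.
  - exists (ln (s + PI/2) - ln s); exact Hg.
  - apply kf_ex; lra.
  - intros t Ht. unfold g, kf. fold x.
    pose proof (u_pos x t ltac:(lra)) as Hu.
    apply Rinv_le_contravar. apply sqrt_lt_R0; auto.
    assert (Hcos : 0 <= cos t) by (apply cos_ge_0; lra).
    assert (Hcos2 : cos t < PI / 2 - t) by (rewrite <- sin_shift; apply sin_lt_x; lra).
    apply Rle_trans with (s + cos t); [|lra].
    rewrite <- (sqrt_pow2 (s + cos t)) by lra. apply sqrt_le_1_alt.
    pose proof (sin2_cos2 t) as Hsc. unfold Rsqr in Hsc.
    unfold x. rewrite Hc. nra.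
Qed.

Lemma nec_convex p : convex_on (F p) 0 1 -> p <= 0.
Proof.
  intros Hc. destruct (Rle_dec p 0) as [|Hn]; auto. exfalso.
  set (m := fd p (1/2)). set (am := Rabs m).
  assert (Ham : 0 <= am) by apply Rabs_pos.
  assert (Hmm : - am <= m) by (unfold am; pose proof (Rabs_le_between m am); pose proof (Rle_abs (-m)); rewrite Rabs_Ropp in *; lra).
  set (M := 4 / p + 2 * am / p + 1).
  assert (HM1 : 4 / p + 2 * am / p >= 0).
  { assert (0 <= 4 / p) by (apply Rdiv_le_0_compat; lra). assert (0 <= 2 * am / p) by (apply Rdiv_le_0_compat; lra). lra. }
  assert (HM : 1 <= M) by (unfold M; lra).
  assert (HMp : 4 < M * p).
  { unfold M. replace ((4 / p + 2 * am / p + 1) * p) with (4 + 2 * am + p) by (field; lra). lra. }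
  assert (HMp2 : 2 * am <= M * p).
  { unfold M. replace ((4 / p + 2 * am / p + 1) * p) with (4 + 2 * am + p) by (field; lra). lra. }
  set (c := exp (- (2 * M))). set (x := 1 - c).
  assert (Hc1 : c * (1 + 2 * M) < 1).
  { unfold c. rewrite exp_Ropp. pose proof (exp_ineq1 (2 * M) ltac:(lra)). pose proof (exp_pos (2 * M)).
    assert (Hiu : / exp (2 * M) * exp (2 * M) = 1) by (field; lra).
    rewrite <- Hiu. apply Rmult_lt_compat_l. apply Rinv_0_lt_compat; lra. lra. }
  assert (Hc0 : 0 < c) by apply exp_pos.
  assert (Hx : 1/2 < x < 1) by (unfold x; nra).
  pose proof (K_big M ltac:(lra)) as HK. fold c x in HK.
  pose proof (convex_der_mono (F p) (fd p) 0 1 Hc (fun z Hz => F_der p z Hz) (1/2) x ltac:(lra) ltac:(lra) ltac:(lra)) as Hm.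
  fold m in Hm.
  pose proof (r_ge x ltac:(lra)). pose proof (r_le1 x ltac:(lra)).
  assert (Hr : r x <= 2 / M).
  { pose proof (E_le x ltac:(lra)). pose proof PI_4. pose proof (K_pos x ltac:(lra)).
    unfold r. apply Rle_trans with (2 / K x).
    { unfold Rdiv. apply Rmult_le_compat_r. left; apply Rinv_0_lt_compat; lra. lra. }
    { unfold Rdiv. apply Rmult_le_compat_l. lra. apply Rinv_le_contravar; lra. } }
  assert (Hfd : c * fd p x <= - p + r x).
  { unfold fd. replace (1 - x) with c by (unfold x; ring).
    replace (c * (- p / c + (r x - c) / (2 * x * c))) with (- p + (r x - c) / (2 * x)) by (field; lra).
    assert ((r x - c) / (2 * x) <= r x); [|lra].
    apply Rmult_le_reg_r with (2 * x). lra. unfold Rdiv. rewrite Rmult_assoc, Rinv_l by lra.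
    replace (1 - x) with c in * by (unfold x; ring). nra. }
  assert (c * m <= c * fd p x) by (apply Rmult_le_compat_l; lra).
  assert (Hr2 : 2 / M < p / 2).
  { apply Rmult_lt_reg_r with M. lra. unfold Rdiv. rewrite Rmult_assoc, Rinv_l by lra. lra. }
  assert (Hc2 : c * am <= p / 4).
  { assert (c * am * (1 + 2 * M) <= am) by nra.
    assert (c * am * (2 * M) <= am) by nra.
    nra. }
  assert (- (c * am) <= c * m) by nra.
  lra.
Qed.

Theorem theorem3 : forall p : R,
  (log_concave_on (h p) 0 1 <-> 7 / 32 <= p) /\
  (log_convex_on (h p) 0 1 <-> p <= 0).
Proof.
  intros p. split; split.
  - intros [_ Hc]. apply nec_concave.
    apply (concave_ext (fun x => ln (h p x))); auto. intros; apply ln_h; auto.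
  - intros Hp. split. intros; apply h_pos; auto.
    apply (concave_ext (F p)). intros; symmetry; apply ln_h; auto. apply concave_F; auto.
  - intros [_ Hc]. apply nec_convex.
    apply (convex_ext (fun x => ln (h p x))); auto. intros; apply ln_h; auto.
  - intros Hp. split. intros; apply h_pos; auto.
    apply (convex_ext (F p)). intros; symmetry; apply ln_h; auto. apply convex_F; auto.
Qed.
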